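(* Let $\Sigma$ be a finite alphabet with $|\Sigma| \geq 8$. Then $\mathrm{Aut}(\Sigma^\mathbb{N})$ does not satisfy the Tits alternative.
   Context: $\Sigma^\mathbb{N}$ is the one-sided full shift with the product topology and the shift $\sigma(x)_i = x_{i+1}$. $\mathrm{Aut}(\Sigma^\mathbb{N})$ is the group of homeomorphisms of $\Sigma^\mathbb{N}$ commuting with $\sigma$. A group satisfies the Tits alternative if every finitely generated subgroup is virtually solvable or contains a free group on two generators. *)

(* Defs.v *)
From mathcomp Require Import all_boot.
From Stdlib Require List.

Set Implicit Arguments.
Unset Strict Implicit.
Unset Printing Implicit Defensive.

Section OneSidedShift.
Variable Sigma : finType.

Definition point := nat -> Sigma.
Definition map := point -> point.

Definition shift (x : point) : point := fun i => x i.+1.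

Definition agree (m : nat) (x y : point) : Prop := forall i, i < m -> x i = y i.

(* Continuity for the product topology of the discrete alphabet:
   cylinders [x_0..x_(m-1)] form a neighbourhood basis of x. *)
Definition continuous (f : map) : Prop :=
  forall (x : point) (n : nat), exists m : nat,
    forall y : point, agree m x y -> agree n (f x) (f y).

Definition isAut (f : map) : Prop :=
  [/\ continuous f,
      (forall x, f (shift x) = shift (f x)) &
      exists g : map, [/\ continuous g, cancel f g & cancel g f]].

Inductive gen (A : map -> Prop) : map -> Prop :=
| gen_id : gen A id
| gen_base f : A f -> gen A f
| gen_comp f g : gen A f -> gen A g -> gen A (f \o g)
| gen_inv f g : gen A f -> cancel f g -> cancel g f -> gen A g.

Definition fgen (S : list map) : map -> Prop := gen (fun f => List.In f S).

Fixpoint derived (K : map -> Prop) (n : nat) : map -> Prop :=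
  match n with
  | 0 => K
  | n'.+1 => gen (fun c => exists a a' b b',
                   derived K n' a /\ derived K n' b /\
                   cancel a a' /\ cancel a' a /\ cancel b b' /\ cancel b' b /\
                   c = a' \o b' \o a \o b)
  end.

Definition solvable_sg (K : map -> Prop) : Prop :=
  exists n, forall f, derived K n f -> f = id.

Definition is_subgroup (K : map -> Prop) : Prop :=
  [/\ K id,
      (forall f g, K f -> K g -> K (f \o g)) &
      (forall f g, K f -> cancel f g -> cancel g f -> K g)].

(* H is virtually solvable: it has a solvable subgroup of finite index
   (finitely many left cosets r_i K cover H). *)
Definition virt_solvable (H : map -> Prop) : Prop :=
  exists K : map -> Prop,
    [/\ is_subgroup K, (forall f, K f -> H f), solvable_sg K &
        exists reps : list map,
          (forall r, List.In r reps -> H r) /\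
          (forall h, H h -> exists r k, [/\ List.In r reps, K k & h = r \o k])].

(* Words in two letters and their inverses: (which generator, inverted?). *)
Definition letter := (bool * bool)%type.

Fixpoint reduced (w : list letter) : bool :=
  match w with
  | l1 :: ((l2 :: _) as w') =>
      ~~ ((l1.1 == l2.1) && (l1.2 != l2.2)) && reduced w'
  | _ => true
  end.

Definition eval_letter (a a' b b' : map) (l : letter) : map :=
  match l with
  | (false, false) => a
  | (false, true) => a'
  | (true, false) => b
  | (true, true) => b'
  end.

Definition eval_word (a a' b b' : map) (w : list letter) : map :=
  foldr (fun l acc => eval_letter a a' b b' l \o acc) id w.

Definition contains_F2 (H : map -> Prop) : Prop :=
  exists a a' b b',
    H a /\ H b /\ cancel a a' /\ cancel a' a /\ cancel b b' /\ cancel b' b /\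
    (forall w : list letter, w <> nil -> reduced w ->
       eval_word a a' b b' w <> id).

Definition Tits_alternative_Aut : Prop :=
  forall S : list map, (forall f, List.In f S -> isAut f) ->
    virt_solvable (fgen S) \/ contains_F2 (fgen S).

End OneSidedShift.

(* Main.v *)
Require Import Defs.
From mathcomp Require Import all_boot fingroup perm cyclic zify.
From Stdlib Require Import FunctionalExtensionality ClassicalEpsilon.

Set Implicit Arguments.
Unset Strict Implicit.
Unset Printing Implicit Defensive.

Section Constr.
Variable Sigma : finType.
Variable x0 : Sigma.
Hypothesis hS : 8 <= #|Sigma|.

Definition e k := nth x0 (enum Sigma) k.
Definition code (s : Sigma) := index s (enum Sigma).
Definition isP s := code s < 5.
Definition ty s : option Sigma := if isP s then None else Some s.
Definition teq (x y : point Sigma) := forall j, ty (x j) = ty (y j).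

Lemma code_e k : k < #|Sigma| -> code (e k) = k.
Proof.
move=> hk; rewrite /code /e index_uniq ?enum_uniq // -cardE //.
Qed.

Lemma e_code s : e (code s) = s.
Proof. by rewrite /e /code nth_index // mem_enum. Qed.

Lemma code_lt s : code s < #|Sigma|.
Proof. by rewrite /code cardE index_mem mem_enum. Qed.

Lemma e_inj a b : a < #|Sigma| -> b < #|Sigma| -> (e a == e b) = (a == b).
Proof.
move=> ha hb; apply/eqP/eqP => [h|->] //.
by rewrite -(code_e ha) -(code_e hb) h.
Qed.

Lemma isP_e k : k < #|Sigma| -> isP (e k) = (k < 5).
Proof. by move=> hk; rewrite /isP code_e. Qed.

Definition e5 := e 5.
Definition e6 := e 6.

Lemma e5P : isP e5 = false. Proof. by rewrite /e5 isP_e //; lia. Qed.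
Lemma e6P : isP e6 = false. Proof. by rewrite /e6 isP_e //; lia. Qed.
Lemma e56 : (e5 == e6) = false. Proof. by rewrite /e5 /e6 e_inj //; lia. Qed.

Lemma ty_isP a b : ty a = ty b -> isP a = isP b.
Proof. by rewrite /ty; case: (isP a); case: (isP b). Qed.

Lemma ty_eqs a b s : ty a = ty b -> isP s = false -> (a == s) = (b == s).
Proof.
rewrite /ty => h hs.
case ha: (isP a); case hb: (isP b); rewrite ha hb in h => //.
- apply/eqP/eqP => h'; subst; by rewrite hs in ha, hb.
- by case: h => ->.
Qed.

Lemma ty_nP a b : ty a = ty b -> isP a = false -> a = b.
Proof. by rewrite /ty => h ha; move: h; rewrite ha; case: (isP b) => // -[]. Qed.

Definition bitc s := (s == e5) || (s == e6).
Definition flip s := if s == e5 then e6 else if s == e6 then e5 else s.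

Lemma bitc_nP s : bitc s -> isP s = false.
Proof. by case/orP => /eqP ->; rewrite ?e5P ?e6P. Qed.

Lemma flip_cases s : (s = e5 /\ flip s = e6) \/ (s = e6 /\ flip s = e5) \/ (~~ bitc s /\ flip s = s).
Proof.
rewrite /flip /bitc.
have [->|h5] := eqVneq s e5; first by left.
have [->|h6] := eqVneq s e6; first by right; left.
by right; right.
Qed.

Lemma flip_isP s : isP (flip s) = isP s.
Proof.
by case: (flip_cases s) => [[-> ->]|[[-> ->]|[_ ->]]]; rewrite ?e5P ?e6P.
Qed.

Lemma flip_bitc s : bitc (flip s) = bitc s.
Proof.
by case: (flip_cases s) => [[-> ->]|[[-> ->]|[_ ->]]]; rewrite /bitc ?eqxx ?orbT.
Qed.

Lemma flipK s : flip (flip s) = s.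
Proof.
case: (flip_cases s) => [[-> ->]|[[-> ->]|[_ h]]].
- by rewrite /flip eq_sym e56 eqxx.
- by rewrite /flip eqxx.
- by rewrite !h.
Qed.

Definition c1 (x : point Sigma) i :=
  [&& bitc (x i), isP (x i.+1), ~~ isP (x i.+3) & x i.+2 == e6].
Definition c2 (x : point Sigma) i :=
  [&& bitc (x i), ~~ isP (x i.+1), isP (x i.+2) & x i.+1 == e6].
Definition S1 (x : point Sigma) : point Sigma := fun i => if c1 x i then flip (x i) else x i.
Definition S2 (x : point Sigma) : point Sigma := fun i => if c2 x i then flip (x i) else x i.

Lemma S1P x i : isP (S1 x i) = isP (x i).
Proof. by rewrite /S1; case: ifP; rewrite ?flip_isP. Qed.
Lemma S2P x i : isP (S2 x i) = isP (x i).
Proof. by rewrite /S2; case: ifP; rewrite ?flip_isP. Qed.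
Lemma S1b x i : bitc (S1 x i) = bitc (x i).
Proof. by rewrite /S1; case: ifP; rewrite ?flip_bitc. Qed.
Lemma S2b x i : bitc (S2 x i) = bitc (x i).
Proof. by rewrite /S2; case: ifP; rewrite ?flip_bitc. Qed.
Lemma S1_id x i : ~~ isP (x i.+1) -> S1 x i = x i.
Proof. by rewrite /S1 /c1 => /negbTE ->; rewrite andbF. Qed.
Lemma S2_id x i : isP (x i.+1) -> S2 x i = x i.
Proof. by rewrite /S2 /c2 => ->; rewrite andbF. Qed.

Lemma c1_S1 x i : c1 (S1 x) i = c1 x i.
Proof.
rewrite /c1 S1b !S1P.
case h: (isP (x i.+3)) => /=; first by rewrite !andbF.
by rewrite S1_id ?h.
Qed.

Lemma c2_S2 x i : c2 (S2 x) i = c2 x i.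
Proof.
rewrite /c2 S2b !S2P.
case h: (isP (x i.+2)) => /=; last by rewrite !andbF.
by rewrite S2_id ?h.
Qed.

Lemma S1K : cancel S1 S1.
Proof.
move=> x; apply: functional_extensionality => i.
rewrite {1}/S1 c1_S1 /S1; case h: (c1 x i) => //.
by rewrite flipK.
Qed.

Lemma S2K : cancel S2 S2.
Proof.
move=> x; apply: functional_extensionality => i.
rewrite {1}/S2 c2_S2 /S2; case h: (c2 x i) => //.
by rewrite flipK.
Qed.


Definition loc (r : nat) (f : Defs.map Sigma) :=
  forall (x y : point Sigma) i, (forall j, j <= r -> x (i + j) = y (i + j)) -> f x i = f y i.

Lemma loc_cont r f : loc r f -> continuous f.
Proof.
move=> hf x n; exists (n + r.+1) => y hxy i hi.
apply: hf => j hj; apply: hxy; lia.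
Qed.

Lemma cont_comp (f g : Defs.map Sigma) : continuous f -> continuous g -> continuous (f \o g).
Proof.
move=> hf hg x n; have [m hm] := hf (g x) n; have [m' hm'] := hg x m.
by exists m' => y hy; apply: hm; apply: hm'.
Qed.

Lemma S1_loc : loc 3 S1.
Proof.
move=> x y i h; rewrite /S1 /c1.
have e0 := h 0 isT; have e1 := h 1 isT; have e2 := h 2 isT; have e3 := h 3 isT.
rewrite !addn0 in e0; rewrite !addnS !addn0 in e1 e2 e3.
by rewrite e0 e1 e2 e3.
Qed.

Lemma S2_loc : loc 2 S2.
Proof.
move=> x y i h; rewrite /S2 /c2.
have e0 := h 0 isT; have e1 := h 1 isT; have e2 := h 2 isT.
rewrite !addn0 in e0; rewrite !addnS !addn0 in e1 e2.
by rewrite e0 e1 e2.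
Qed.

Definition t : Defs.map Sigma := S1 \o S2.
Definition tinv : Defs.map Sigma := S2 \o S1.

Lemma tK : cancel t tinv.
Proof. by move=> x; rewrite /t /tinv /= S1K S2K. Qed.
Lemma tinvK : cancel tinv t.
Proof. by move=> x; rewrite /t /tinv /= S2K S1K. Qed.

Lemma S1_shift x : S1 (shift x) = shift (S1 x).
Proof. by apply: functional_extensionality. Qed.
Lemma S2_shift x : S2 (shift x) = shift (S2 x).
Proof. by apply: functional_extensionality. Qed.

Lemma t_aut : isAut t.
Proof.
split.
- by apply: cont_comp; [exact: loc_cont S1_loc| exact: loc_cont S2_loc].
- by move=> x; rewrite /t /= S2_shift S1_shift.
- exists tinv; split; [|exact: tK|exact: tinvK].
  by apply: cont_comp; [exact: loc_cont S2_loc| exact: loc_cont S1_loc].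
Qed.

Definition Local (f : Defs.map Sigma) :=
  forall x y i, teq x y -> x i = y i -> f x i = f y i.
Definition PresP (f : Defs.map Sigma) := forall x i, isP (f x i) = isP (x i).
Definition TeqPres (f : Defs.map Sigma) := forall x y, teq x y -> teq (f x) (f y).

Lemma teq_refl x : teq x x. Proof. by []. Qed.
Lemma teq_sym x y : teq x y -> teq y x. Proof. by move=> h j. Qed.
Lemma teq_trans x y z : teq x y -> teq y z -> teq x z.
Proof. by move=> h h' j; rewrite h. Qed.

Lemma Local_TeqPres f : Local f -> PresP f -> TeqPres f.
Proof.
move=> hl hp x y h j.
case hx: (isP (x j)).
- have hy : isP (y j) by rewrite -(ty_isP (h j)).
  by rewrite /ty !hp hx hy.
- by rewrite (hl x y j h (ty_nP (h j) hx)).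
Qed.

Lemma S1_Local : Local S1.
Proof.
move=> x y i h hi; rewrite /S1 /c1 hi (ty_isP (h i.+1)) (ty_isP (h i.+3)).
by rewrite (ty_eqs (h i.+2) e6P).
Qed.

Lemma S2_Local : Local S2.
Proof.
move=> x y i h hi; rewrite /S2 /c2 hi (ty_isP (h i.+1)) (ty_isP (h i.+2)).
by rewrite (ty_eqs (h i.+1) e6P).
Qed.

Lemma Local_comp f g : Local f -> Local g -> PresP g -> Local (f \o g).
Proof.
move=> hf hg hpg x y i h hi /=; apply: hf; first exact: Local_TeqPres.
exact: hg.
Qed.

Lemma PresP_comp f g : PresP f -> PresP g -> PresP (f \o g).
Proof. by move=> hf hg x i /=; rewrite hf hg. Qed.

Lemma t_Local : Local t. Proof. apply: Local_comp; [exact: S1_Local|exact: S2_Local|exact: S2P]. Qed.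
Lemma tinv_Local : Local tinv. Proof. apply: Local_comp; [exact: S2_Local|exact: S1_Local|exact: S1P]. Qed.
Lemma t_PresP : PresP t. Proof. apply: PresP_comp; [exact: S1P|exact: S2P]. Qed.
Lemma tinv_PresP : PresP tinv. Proof. apply: PresP_comp; [exact: S2P|exact: S1P]. Qed.
Lemma t_TP : TeqPres t. Proof. exact: Local_TeqPres t_Local t_PresP. Qed.
Lemma tinv_TP : TeqPres tinv. Proof. exact: Local_TeqPres tinv_Local tinv_PresP. Qed.

Lemma iter_TP f n : TeqPres f -> TeqPres (iter n f).
Proof. by move=> hf; elim: n => [|n IH] x y h //=; apply: hf; apply: IH. Qed.

Lemma t_tinv_comm x : t (tinv x) = tinv (t x).
Proof. by rewrite tinvK tK. Qed.

Lemma tinv_iter_t n x : tinv (iter n t x) = iter n t (tinv x).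
Proof. by elim: n => [|n IH] //=; rewrite -IH t_tinv_comm. Qed.

Lemma iter_tinv_t m n x : iter m tinv (iter n t x) = iter n t (iter m tinv x).
Proof. by elim: m => [|m IH] //=; rewrite IH tinv_iter_t. Qed.

Lemma iter_t_tinvK n x : iter n t (iter n tinv x) = x.
Proof. by elim: n x => [|n IH] x //; rewrite iterSr iterS tinvK IH. Qed.

Lemma iter_tinv_tK n x : iter n tinv (iter n t x) = x.
Proof. by elim: n x => [|n IH] x //; rewrite iterSr iterS tK IH. Qed.

Definition TA (f : Defs.map Sigma) n m := forall x, teq (f x) (iter n t (iter m tinv x)).

Definition Good (f : Defs.map Sigma) := [/\ Local f, PresP f & exists n m, TA f n m].

Lemma TP_tt n m : TeqPres (fun x => iter n t (iter m tinv x)).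
Proof.
move=> x y h; apply: iter_TP; first exact: t_TP.
by apply: iter_TP; first exact: tinv_TP.
Qed.

Lemma Good_TP f : Good f -> TeqPres f.
Proof. by case=> hl hp _; exact: Local_TeqPres. Qed.

Lemma Good_comp f g : Good f -> Good g -> Good (f \o g).
Proof.
case=> hlf hpf [nf [mf hf]] [hlg hpg [ng [mg hg]]]; split.
- exact: Local_comp.
- exact: PresP_comp.
- exists (nf + ng), (mf + mg) => x /=.
  apply: teq_trans (hf (g x)) _.
  apply: teq_trans (TP_tt nf mf (hg x)) _.
  by rewrite iter_tinv_t iterD iterD.
Qed.

Lemma TA_comp f g nf mf ng mg : TA f nf mf -> TA g ng mg -> TA (f \o g) (nf + ng) (mf + mg).
Proof.
move=> hf hg x /=.
apply: teq_trans (hf (g x)) _.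
apply: teq_trans (TP_tt nf mf (hg x)) _.
by rewrite iter_tinv_t iterD iterD.
Qed.

Lemma TA_inv f g n m : TA f n m -> cancel g f -> TA g m n.
Proof.
move=> hf hgf x.
have h := hf (g x); rewrite hgf in h.
have h2 := TP_tt m n (teq_sym h).
by rewrite iter_tinv_tK iter_t_tinvK in h2.
Qed.

Definition upd (y : point Sigma) i s : point Sigma := fun j => if j == i then s else y j.

Lemma Good_inv f g : Good f -> cancel f g -> cancel g f -> Good g.
Proof.
case=> hl hp [n [m hf]] hfg hgf.
have hg : TA g m n by exact: TA_inv hgf.
have hgT : TeqPres g.
  move=> x y h; apply: teq_trans (hg x) _; apply: teq_trans (TP_tt m n h) _.
  exact: teq_sym (hg y).
split.
- move=> x y i h hi.
  set u := g x; set v := g y.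
  have huv : teq u v by exact: hgT.
  set v' := upd v i (u i).
  have hv'u : teq v' u by move=> j; rewrite /v' /upd; case: eqP => [->|] //; rewrite huv.
  have hv'v : teq v' v by move=> j; rewrite /v' /upd; case: eqP => [->|] //; rewrite huv.
  have hfe : f v' = f v.
    apply: functional_extensionality => j.
    have [->|hj] := eqVneq j i.
    - rewrite (hl v' u i hv'u); last by rewrite /v' /upd eqxx.
      by rewrite /u /v !hgf.
    - by apply: hl => //; rewrite /v' /upd (negbTE hj).
  have : v' = v by rewrite -(hfg v') hfe hfg.
  by move=> <-; rewrite /v' /upd eqxx.
- by move=> x i; rewrite -[in RHS](hgf x) hp.
- by exists m, n.
Qed.

Lemma teq_nP x y i : teq x y -> isP (y i) = false -> x i = y i.
Proof. move=> h hy; apply: ty_nP (h i) _; by rewrite (ty_isP (h i)). Qed.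

Lemma law (c cinv : Defs.map Sigma) : Good c -> (forall x, teq (c x) x) -> cancel c cinv ->
  forall x, iter #|{perm Sigma}| c x = x.
Proof.
case=> hl hp _ hteq hK x.
have hit : forall k, teq (iter k c x) x.
  by elim=> [|k IH] //=; apply: teq_trans (hteq _) IH.
apply: functional_extensionality => i.
case hxi: (isP (x i)); last by apply: teq_nP (hit _) hxi.
pose pi v := if isP v then c (upd x i v) i else v.
have piP : forall v, isP (pi v) = isP v.
  by move=> v; rewrite /pi; case h: (isP v) => //; rewrite hp /upd eqxx.
have hupd : forall v w, isP v -> isP w -> teq (upd x i v) (upd x i w).
  by move=> v w hv hw j; rewrite /upd; case: eqP => // _; rewrite /ty hv hw.
have pi_inj : injective pi.
  move=> v w; rewrite /pi.
  case hv: (isP v); case hw: (isP w) => h.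
  - have : c (upd x i v) = c (upd x i w).
      apply: functional_extensionality => j.
      have [->|hj] := eqVneq j i; first exact: h.
      by apply: hl; [exact: hupd|rewrite /upd (negbTE hj)].
    move=> /(congr1 cinv); rewrite !hK => /(congr1 (fun y => y i)).
    by rewrite /upd eqxx.
  - by move: (hp (upd x i v) i); rewrite h /upd eqxx hv hw.
  - by move: (hp (upd x i w) i); rewrite -h /upd eqxx hv hw.
  - by [].
have hiter : forall k, iter k c x i = iter k pi (x i).
  elim=> [|k IH] //=.
  have hPk : isP (iter k c x i) by rewrite (ty_isP (hit k i)).
  rewrite -IH /pi hPk.
  apply: hl; last by rewrite /upd eqxx.
  move=> j; rewrite /upd; case: eqP => [->|_]; last exact: hit.
  by rewrite /ty hPk.
rewrite hiter.
set s := perm pi_inj.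
have hs : (s ^+ #|{perm Sigma}|)%g = 1%g.
  have := expg_cardG (in_setT s); rewrite cardsT => ->; done.
have := congr1 (fun p : {perm Sigma} => p (x i)) hs.
by rewrite permX perm1 /s => h; rewrite -{2}h; apply: eq_iter => v; rewrite permE.
Qed.

Definition ctx (x : point Sigma) i : point Sigma := fun j => x (i + j).
Definition Uinv (U : point Sigma -> bool) := forall x y, teq x y -> U x = U y.
Definition ptP (f : Sigma -> Sigma) := forall s, isP s -> isP (f s).
Definition lamp (U : point Sigma -> bool) (f : Sigma -> Sigma) : Defs.map Sigma :=
  fun x i => if isP (x i) && U (ctx x i) then f (x i) else x i.

Lemma teq_ctx x y i : teq x y -> teq (ctx x i) (ctx y i).
Proof. by move=> h j; exact: h. Qed.

Lemma lamp_P U f : ptP f -> PresP (lamp U f).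
Proof.
move=> hf x i; rewrite /lamp; case h: (isP (x i)) => //=.
by case: (U _) => //; rewrite hf.
Qed.

Lemma lamp_nP U f x i : isP (x i) = false -> lamp U f x i = x i.
Proof. by rewrite /lamp => ->. Qed.

Lemma lamp_teq U f x : ptP f -> teq (lamp U f x) x.
Proof.
move=> hf j; case h: (isP (x j)).
- by rewrite /ty (lamp_P _ hf) h.
- by rewrite lamp_nP.
Qed.

Lemma lamp_at U f x y i : Uinv U -> teq y x ->
  lamp U f y i = if isP (y i) && U (ctx x i) then f (y i) else y i.
Proof. by move=> hU h; rewrite /lamp (hU _ _ (teq_ctx i h)). Qed.

Lemma lamp_Local U f : Uinv U -> Local (lamp U f).
Proof. by move=> hU x y i h hi; rewrite (@lamp_at _ _ _ _ _ hU h) /lamp hi. Qed.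

Lemma lamp_Good U f : Uinv U -> ptP f -> Good (lamp U f).
Proof.
move=> hU hf; split; [exact: lamp_Local|exact: lamp_P|].
by exists 0, 0 => x /=; exact: lamp_teq.
Qed.

Lemma lamp_ext U f g : (forall s, isP s -> f s = g s) -> lamp U f = lamp U g.
Proof.
move=> h; apply: functional_extensionality => x; apply: functional_extensionality => i.
rewrite /lamp; case h1: (isP (x i)) => //=; case: (U _) => //; exact: h.
Qed.

Lemma lamp_comp U f g x : Uinv U -> ptP g -> lamp U f (lamp U g x) = lamp U (f \o g) x.
Proof.
move=> hU hg; apply: functional_extensionality => i.
rewrite (@lamp_at _ _ _ _ _ hU (@lamp_teq _ _ _ hg)) /lamp.
case hx: (isP (x i)); case hu: (U (ctx x i)); rewrite /= ?hx ?andbT ?andbF //.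
by rewrite (hg _ hx).
Qed.

Lemma lamp_idP U f x : Uinv U -> (forall s, isP s -> f s = s) -> lamp U f x = x.
Proof.
move=> hU h; apply: functional_extensionality => i; rewrite /lamp.
by case hx: (isP (x i)) => //=; case: (U _) => //; rewrite h.
Qed.

Definition disj (U V : point Sigma -> bool) := forall z, U z -> V z -> False.

Lemma lamp_swap U V f g x : Uinv U -> Uinv V -> disj U V -> ptP f -> ptP g ->
  lamp U f (lamp V g x) = lamp V g (lamp U f x).
Proof.
move=> hU hV hd hf hg; apply: functional_extensionality => i.
rewrite (@lamp_at _ _ _ _ _ hU (@lamp_teq _ _ _ hg)) (@lamp_at _ _ _ _ _ hV (@lamp_teq _ _ _ hf)) /lamp.
case hx: (isP (x i)); case hu: (U (ctx x i)); case hv: (V (ctx x i));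
  rewrite /= ?hx ?andbT ?andbF //.
all: try by case: (hd _ hu hv).
all: try by rewrite (hf _ hx).
all: try by rewrite (hg _ hx).
Qed.

Lemma lamp_inter U V c c' d d' x : Uinv U -> Uinv V -> ptP c -> ptP d -> ptP c' -> ptP d' ->
  (forall s, isP s -> c' (c s) = s) -> (forall s, isP s -> d' (d s) = s) ->
  lamp U c' (lamp V d' (lamp U c (lamp V d x))) = lamp (fun z => U z && V z) (c' \o d' \o c \o d) x.
Proof.
move=> hU hV hc hd hc' hd' hcc hdd; apply: functional_extensionality => i.
have t1 := @lamp_teq V d x hd.
have t2 := teq_trans (@lamp_teq U c _ hc) t1.
have t3 := teq_trans (@lamp_teq V d' _ hd') t2.
rewrite (@lamp_at _ _ _ _ _ hU t3) (@lamp_at _ _ _ _ _ hV t2) (@lamp_at _ _ _ _ _ hU t1) (@lamp_at _ _ _ _ _ hV (teq_refl x)).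
rewrite /lamp.
case hx: (isP (x i)); case hu: (U (ctx x i)); case hv: (V (ctx x i));
  rewrite /= ?hx ?andbT ?andbF //.
all: try (have h1 := hd _ hx; have h2 := hc _ h1; have h3 := hd' _ h2;
  by rewrite h1 h2 h3).
all: try by rewrite (hc _ hx) hcc.
all: try by rewrite (hd _ hx) hdd.
Qed.

Lemma S1_fixP x i : isP (x i) -> S1 x i = x i.
Proof. by move=> h; rewrite /S1 /c1 (_ : bitc (x i) = false) //; apply: contraTF h => /bitc_nP ->. Qed.
Lemma S2_fixP x i : isP (x i) -> S2 x i = x i.
Proof. by move=> h; rewrite /S2 /c2 (_ : bitc (x i) = false) //; apply: contraTF h => /bitc_nP ->. Qed.
Lemma tinv_fixP x i : isP (x i) -> tinv x i = x i.
Proof. by move=> h; rewrite /tinv /= S2_fixP ?S1P //; exact: S1_fixP. Qed.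
Lemma t_fixP x i : isP (x i) -> t x i = x i.
Proof. by move=> h; rewrite /t /= S1_fixP ?S2P //; exact: S2_fixP. Qed.

Lemma S1_ctx x i : ctx (S1 x) i = S1 (ctx x i).
Proof. by apply: functional_extensionality => j; rewrite /ctx /S1 /c1 !addnS. Qed.
Lemma S2_ctx x i : ctx (S2 x) i = S2 (ctx x i).
Proof. by apply: functional_extensionality => j; rewrite /ctx /S2 /c2 !addnS. Qed.
Lemma tinv_ctx x i : ctx (tinv x) i = tinv (ctx x i).
Proof. by rewrite /tinv /= S2_ctx S1_ctx. Qed.

Lemma lamp_conj U f x : Uinv U -> ptP f ->
  t (lamp U f (tinv x)) = lamp (fun z => U (tinv z)) f x.
Proof.
move=> hU hf; apply: functional_extensionality => i.
have hy := @lamp_teq U f (tinv x) hf.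
case hx: (isP (x i)).
- have hPt : isP (tinv x i) by rewrite tinv_PresP.
  rewrite t_fixP; last by rewrite lamp_P.
  by rewrite /lamp hPt hx /= tinv_ctx tinv_fixP.
- rewrite lamp_nP //.
  have hnt : isP (tinv x i) = false by rewrite tinv_PresP.
  rewrite (t_Local hy); last by rewrite lamp_nP.
  by rewrite tinvK.
Qed.

Definition trips : seq (nat * nat * nat) :=
  [:: (0,1,2); (0,1,3); (0,1,4); (0,2,1); (0,2,3); (0,2,4); (0,3,1); (0,3,2); (0,3,4); (0,4,1);
      (0,4,2); (0,4,3); (1,2,3); (1,2,4); (1,3,2); (1,3,4); (1,4,2); (1,4,3); (2,3,4); (2,4,3)].
Definition tab : seq (nat * nat) :=
  [:: (4,13); (3,11); (3,8); (1,16); (0,11); (0,8); (0,17); (1,10); (1,5); (0,15);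
      (2,7); (2,4); (1,18); (2,19); (0,19); (2,18); (0,18); (1,19); (5,15); (4,17)].
Definition trip k := nth (0,1,2) trips k.
Definition rev3 (tr : nat * nat * nat) := let: (a, b, c) := tr in (a, c, b).
Definition cycn (tr : nat * nat * nat) (m : nat) :=
  let: (a, b, c) := tr in if m == a then b else if m == b then c else if m == c then a else m.
Definition cyc3 (tr : nat * nat * nat) (s : Sigma) :=
  let: (a, b, c) := tr in
  if s == e a then e b else if s == e b then e c else if s == e c then e a else s.
Definition okt (tr : nat * nat * nat) := let: (a, b, c) := tr in [&& a < 5, b < 5 & c < 5].

Definition fb k := cyc3 (trip k).
Definition fbi k := cyc3 (rev3 (trip k)).

Lemma okt_all : all okt trips. Proof. by []. Qed.
Lemma trip_ok k : k < 20 -> okt (trip k).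
Proof. by move=> hk; apply: (all_nthP _ okt_all). Qed.
Lemma trip_rev_ok k : k < 20 -> okt (rev3 (trip k)).
Proof. move=> /trip_ok; case: (trip k) => [[a b] c]; rewrite /okt /= => /and3P [? ? ?]; exact/and3P. Qed.

Lemma cycn_lt tr m : okt tr -> m < 5 -> cycn tr m < 5.
Proof. case: tr => [[a b] c]; rewrite /okt /cycn /= => /and3P [ha hb hc] hm; by repeat case: ifP. Qed.

Lemma cyc3_e tr m : okt tr -> m < 5 -> cyc3 tr (e m) = e (cycn tr m).
Proof.
case: tr => [[a b] c]; rewrite /okt /cycn /cyc3 /= => /and3P [ha hb hc] hm.
have L : forall n, n < 5 -> n < #|Sigma| by move=> n hn; lia.
by rewrite !e_inj ?L //; repeat case: ifP.
Qed.

Lemma isP_eP s : isP s -> s = e (code s) /\ code s < 5.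
Proof. by move=> h; rewrite e_code. Qed.

Lemma cyc3_ptP tr : okt tr -> ptP (cyc3 tr).
Proof.
move=> ho s hs; have [h1 h2] := isP_eP hs; rewrite h1 cyc3_e // /isP code_e.
  exact: cycn_lt.
have := cycn_lt ho h2; lia.
Qed.

Lemma cyc3_P tr s : okt tr -> isP s -> cyc3 tr s = e (cycn tr (code s)).
Proof. by move=> ho /isP_eP [h hs]; rewrite h cyc3_e // code_e //; lia. Qed.

Lemma code_cyc tr s : okt tr -> isP s -> code (cyc3 tr s) = cycn tr (code s).
Proof.
move=> ho hs; rewrite cyc3_P // code_e //.
have := cycn_lt ho (proj2 (isP_eP hs)); lia.
Qed.

Lemma inv_check : all (fun k => all (fun m => cycn (rev3 (trip k)) (cycn (trip k) m) == m) (iota 0 5)) (iota 0 20).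
Proof. by []. Qed.
Lemma inv_check2 : all (fun k => all (fun m => cycn (trip k) (cycn (rev3 (trip k)) m) == m) (iota 0 5)) (iota 0 20).
Proof. by []. Qed.

Definition tabok k :=
  let: (k1, k2) := nth (0,0) tab k in
  [&& k1 < 20, k2 < 20 &
    all (fun m => cycn (trip k) m ==
      cycn (rev3 (trip k1)) (cycn (rev3 (trip k2)) (cycn (trip k1) (cycn (trip k2) m)))) (iota 0 5)].
Lemma tab_check : all tabok (iota 0 20). Proof. by []. Qed.

Lemma mem_iota_lt n k : k < n -> k \in iota 0 n.
Proof. by move=> h; rewrite mem_iota. Qed.

Lemma eq_on_P (f g : Sigma -> Sigma) : (forall m, m < 5 -> f (e m) = g (e m)) ->
  forall s, isP s -> f s = g s.
Proof. by move=> h s /isP_eP [h1 h2]; rewrite h1; apply: h. Qed.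

Lemma fbK k : k < 20 -> forall s, isP s -> fbi k (fb k s) = s.
Proof.
move=> hk; apply: eq_on_P => m hm.
rewrite /fbi /fb cyc3_e ?trip_ok // cyc3_e ?trip_rev_ok ?cycn_lt ?trip_ok //.
have := allP inv_check k (mem_iota_lt hk) => /allP /(_ m (mem_iota_lt hm)) /eqP -> //.
Qed.

Lemma fbiK k : k < 20 -> forall s, isP s -> fb k (fbi k s) = s.
Proof.
move=> hk; apply: eq_on_P => m hm.
rewrite /fbi /fb cyc3_e ?trip_rev_ok // cyc3_e ?trip_ok ?cycn_lt ?trip_rev_ok //.
have := allP inv_check2 k (mem_iota_lt hk) => /allP /(_ m (mem_iota_lt hm)) /eqP -> //.
Qed.

Lemma fb_ptP k : k < 20 -> ptP (fb k). Proof. by move=> hk; apply: cyc3_ptP; exact: trip_ok. Qed.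
Lemma fbi_ptP k : k < 20 -> ptP (fbi k). Proof. by move=> hk; apply: cyc3_ptP; exact: trip_rev_ok. Qed.

Lemma tab_spec k : k < 20 -> exists k1 k2, [/\ k1 < 20, k2 < 20 &
  forall s, isP s -> fb k s = (fbi k1 \o fbi k2 \o fb k1 \o fb k2) s].
Proof.
move=> hk; have := allP tab_check k (mem_iota_lt hk); rewrite /tabok.
case: (nth (0,0) tab k) => k1 k2 /and3P [h1 h2 /allP ha].
exists k1, k2; split=> //; apply: eq_on_P => m hm /=.
have o1 := trip_ok h1; have o2 := trip_ok h2; have r1 := trip_rev_ok h1; have r2 := trip_rev_ok h2.
rewrite /fbi /fb cyc3_e ?trip_ok //.
rewrite (cyc3_e o2 hm) (cyc3_e o1 (cycn_lt o2 hm)) (cyc3_e r2 (cycn_lt o1 (cycn_lt o2 hm))).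
rewrite (cyc3_e r1 (cycn_lt r2 (cycn_lt o1 (cycn_lt o2 hm)))).
by move: (ha m (mem_iota_lt hm)) => /eqP ->.
Qed.

Definition Cc (x : point Sigma) := (x 1 == e5) && (x 2 == e5).
Definition notC (x : point Sigma) := ~~ Cc x.

Lemma Cc_inv : Uinv Cc.
Proof. by move=> x y h; rewrite /Cc (ty_eqs (h 1) e5P) (ty_eqs (h 2) e5P). Qed.
Lemma notC_inv : Uinv notC.
Proof. by move=> x y h; rewrite /notC (Cc_inv h). Qed.

Definition dep2 (U : point Sigma -> bool) :=
  forall x y, (forall j, j <= 2 -> x j = y j) -> U x = U y.

Lemma Cc_dep2 : dep2 Cc.
Proof. by move=> x y h; rewrite /Cc (h 1 isT) (h 2 isT). Qed.
Lemma notC_dep2 : dep2 notC.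
Proof. by move=> x y h; rewrite /notC (Cc_dep2 h). Qed.

Lemma lamp_loc U f : dep2 U -> loc 2 (lamp U f).
Proof.
move=> hU x y i h; rewrite /lamp.
have e0 := h 0 isT; rewrite addn0 in e0.
by rewrite e0 (hU (ctx x i) (ctx y i)).
Qed.

Lemma lamp_shift U f x : lamp U f (shift x) = shift (lamp U f x).
Proof.
apply: functional_extensionality => i; rewrite /lamp /shift.
have -> : ctx (fun i => x i.+1) i = ctx x i.+1.
  by apply: functional_extensionality => j; rewrite /ctx addSn.
done.
Qed.

Lemma lamp_aut U f g : dep2 U -> Uinv U -> ptP f -> ptP g ->
  (forall s, isP s -> g (f s) = s) -> (forall s, isP s -> f (g s) = s) -> isAut (lamp U f).
Proof.
move=> hd hU hf hg hgf hfg; split.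
- exact: loc_cont (lamp_loc _ hd).
- exact: lamp_shift.
- exists (lamp U g); split.
  + exact: loc_cont (lamp_loc _ hd).
  + by move=> x; rewrite lamp_comp //; apply: lamp_idP => // s hs /=; auto.
  + by move=> x; rewrite lamp_comp //; apply: lamp_idP => // s hs /=; auto.
Qed.

Fixpoint gens n : list (Defs.map Sigma) :=
  if n is n'.+1 then lamp Cc (fb n') :: lamp notC (fb n') :: gens n' else [:: t].

Lemma gens_aut n : n <= 20 -> forall f, List.In f (gens n) -> isAut f.
Proof.
elim: n => [|n IH] hn f /=.
- by case=> // <-; exact: t_aut.
- have hn' : n < 20 by lia.
  case=> [<-|[<-|h]].
  + apply: (lamp_aut (g := fbi n)); [exact: Cc_dep2|exact: Cc_inv|exact: fb_ptP|exact: fbi_ptP|exact: fbK|exact: fbiK].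
  + apply: (lamp_aut (g := fbi n)); [exact: notC_dep2|exact: notC_inv|exact: fb_ptP|exact: fbi_ptP|exact: fbK|exact: fbiK].
  + by apply: IH => //; lia.
Qed.

Lemma gens_t n : List.In t (gens n).
Proof. by elim: n => [|n IH] /=; [left|right; right]. Qed.

Lemma gens_C n k : k < n -> List.In (lamp Cc (fb k)) (gens n) /\ List.In (lamp notC (fb k)) (gens n).
Proof.
elim: n => [|n IH] // hk /=.
have [->|hne] := eqVneq k n; first by split; [left|right; left].
have hk' : k < n by lia.
by case: (IH hk') => h1 h2; split; right; right.
Qed.

Notation H := (fgen (gens 20)).

Lemma H_inv f g : H f -> cancel f g -> cancel g f -> H g.
Proof. move=> hf h1 h2; exact: gen_inv hf h1 h2. Qed.

Definition Lam (U : point Sigma -> bool) := forall k, k < 20 -> H (lamp U (fb k)).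

Lemma H_lampi U k : Uinv U -> k < 20 -> H (lamp U (fb k)) -> H (lamp U (fbi k)).
Proof.
move=> hU hk h; apply: (H_inv h).
- move=> x; rewrite lamp_comp //; last exact: fb_ptP.
  by apply: lamp_idP => //; exact: fbK.
- move=> x; rewrite lamp_comp //; last exact: fbi_ptP.
  by apply: lamp_idP => //; exact: fbiK.
Qed.

Lemma Lam_inter U V : Uinv U -> Uinv V -> Lam U -> Lam V -> Lam (fun z => U z && V z).
Proof.
move=> hU hV hLU hLV k hk.
have [k1 [k2 [h1 h2 hs]]] := tab_spec hk.
rewrite (lamp_ext _ hs).
have -> : lamp (fun z => U z && V z) (fbi k1 \o fbi k2 \o fb k1 \o fb k2) =
   lamp U (fbi k1) \o lamp V (fbi k2) \o lamp U (fb k1) \o lamp V (fb k2).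
  apply: functional_extensionality => x /=.
  rewrite lamp_inter //.
  all: first [exact: fb_ptP | exact: fbi_ptP | exact: fbK | idtac].
repeat apply: gen_comp.
- exact: H_lampi (hLU _ h1).
- exact: H_lampi (hLV _ h2).
- exact: hLU.
- exact: hLV.
Qed.

Lemma H_t : H t. Proof. apply: gen_base; exact: gens_t. Qed.
Lemma H_tinv : H tinv. Proof. exact: H_inv H_t tK tinvK. Qed.

Lemma Uinv_tinv U : Uinv U -> Uinv (fun z => U (tinv z)).
Proof. by move=> hU x y h; apply: hU; apply: tinv_TP. Qed.

Lemma Lam_conj U : Uinv U -> Lam U -> Lam (fun z => U (tinv z)).
Proof.
move=> hU hL k hk.
have -> : lamp (fun z => U (tinv z)) (fb k) = t \o lamp U (fb k) \o tinv.
  by apply: functional_extensionality => x /=; rewrite lamp_conj //; exact: fb_ptP.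
apply: gen_comp; [apply: gen_comp; [exact: H_t|exact: hL]|exact: H_tinv].
Qed.

Fixpoint Ufam (i : nat) : point Sigma -> bool :=
  if i is i'.+1 then fun z => Cc z && Ufam i' (tinv z) else notC.

Lemma Ufam_inv i : Uinv (Ufam i).
Proof.
elim: i => [|i IH] /=; first exact: notC_inv.
move=> x y h; rewrite (Cc_inv h); congr (_ && _); exact: (Uinv_tinv IH h).
Qed.

Lemma Lam_C : Lam Cc.
Proof. by move=> k hk; apply: gen_base; case: (gens_C hk). Qed.
Lemma Lam_notC : Lam notC.
Proof. by move=> k hk; apply: gen_base; case: (gens_C hk). Qed.

Lemma Lam_Ufam i : Lam (Ufam i).
Proof.
elim: i => [|i IH] /=; first exact: Lam_notC.
apply: Lam_inter; [exact: Cc_inv|exact: Uinv_tinv (Ufam_inv i)|exact: Lam_C|].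
exact: Lam_conj (Ufam_inv i) IH.
Qed.

Lemma Ufam_char i z : Ufam i z -> (forall k, k < i -> Cc (iter k tinv z)) /\ ~~ Cc (iter i tinv z).
Proof.
elim: i z => [|i IH] z /=; first by move=> h; split.
case/andP=> hc /IH [h1 h2]; split; last by rewrite -iterS iterSr.
case=> [|k] hk //; rewrite iterSr; apply: h1; lia.
Qed.

Lemma Ufam_disj i j z : Ufam i z -> Ufam j z -> i = j.
Proof.
move=> /Ufam_char [hi1 hi2] /Ufam_char [hj1 hj2].
have [hlt|hge] := ltnP i j; first by rewrite (hj1 _ hlt) in hi2.
have [hlt'|hge'] := ltnP j i; first by rewrite (hi1 _ hlt') in hj2.
lia.
Qed.

Definition Pat (x : point Sigma) := forall g, [&& isP (x (3*g)), bitc (x (3*g+1)) & bitc (x (3*g+2))].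
Definition Front (x : point Sigma) L :=
  [/\ Pat x, (forall g, g < L -> x (3*g+1) = e5 /\ x (3*g+2) = e5) & x (3*L+1) = e6].

Lemma flip5 : flip e5 = e6. Proof. by rewrite /flip eqxx. Qed.

Lemma Pat_S1 x : Pat x -> Pat (S1 x).
Proof. by move=> h g; rewrite S1P !S1b. Qed.
Lemma Pat_S2 x : Pat x -> Pat (S2 x).
Proof. by move=> h g; rewrite S2P !S2b. Qed.

Lemma bitc_nPn s : bitc s -> ~~ isP s.
Proof. by move/bitc_nP => ->. Qed.

Lemma S1_1 x g : Pat x -> S1 x (3*g+1) = x (3*g+1).
Proof.
move=> h; apply: S1_id; have := h g => /and3P [_ _ h2].
by rewrite (_ : (3*g+1).+1 = 3*g+2) ?bitc_nPn //; lia.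
Qed.

Lemma S1_2 x g : Pat x -> S1 x (3*g+2) = if x (3*g.+1+1) == e6 then flip (x (3*g+2)) else x (3*g+2).
Proof.
move=> h; rewrite /S1 /c1.
have := h g => /and3P [_ _ h2]; have := h g.+1 => /and3P [h3 h4 h5].
rewrite (_ : (3*g+2).+1 = 3*g.+1); last lia.
rewrite (_ : (3*g.+1).+2 = 3*g.+1+2); last lia.
rewrite (_ : (3*g.+1).+1 = 3*g.+1+1); last lia.
by rewrite h2 h3 bitc_nPn.
Qed.

Lemma S2_1 x g : Pat x -> S2 x (3*g+1) = if x (3*g+2) == e6 then flip (x (3*g+1)) else x (3*g+1).
Proof.
move=> h; rewrite /S2 /c2.
have := h g => /and3P [_ h1 h2]; have := h g.+1 => /and3P [h3 h4 h5].
rewrite (_ : (3*g+1).+1 = 3*g+2); last lia.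
rewrite (_ : (3*g+2).+1 = 3*g.+1); last lia.
by rewrite h1 h3 bitc_nPn.
Qed.

Lemma S2_2 x g : Pat x -> S2 x (3*g+2) = x (3*g+2).
Proof.
move=> h; apply: S2_id; have := h g.+1 => /and3P [h3 _ _].
by rewrite (_ : (3*g+2).+1 = 3*g.+1) //; lia.
Qed.

Lemma Front_tinv x L : Front x L.+1 -> Front (tinv x) L.
Proof.
case=> hp hz h6.
have hp1 := Pat_S1 hp.
have E1 g : tinv x (3*g+1) = if S1 x (3*g+2) == e6 then flip (x (3*g+1)) else x (3*g+1).
  by rewrite /tinv /= S2_1 // S1_1.
have E2 g : tinv x (3*g+2) = S1 x (3*g+2).
  by rewrite /tinv /= S2_2.
split.
- exact: Pat_S2.
- move=> g hg.
  have [a1 a2] := hz g (ltn_trans hg (ltnSn _)).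
  have [b1 _] := hz g.+1 hg.
  have hs : S1 x (3*g+2) = e5 by rewrite S1_2 // b1 a2 e56.
  by rewrite E1 E2 hs e56 a1.
- have [a1 a2] := hz L (ltnSn _).
  have hs : S1 x (3*L+2) = e6 by rewrite S1_2 // h6 eqxx a2 flip5.
  by rewrite E1 hs eqxx a1 flip5.
Qed.

Lemma Front_U L x : Front x L -> Ufam L x.
Proof.
elim: L x => [|L IH] x hf /=.
- case: hf => _ _ h6; rewrite /notC /Cc.
  by move: h6; rewrite muln0 add0n => ->; rewrite eq_sym e56.
- apply/andP; split; last by apply: IH; exact: Front_tinv.
  case: hf => _ hz _; have [a1 a2] := hz 0 isT.
  by move: a1 a2; rewrite muln0 !add0n /Cc => -> ->; rewrite eqxx.
Qed.

Definition wpt L : point Sigma := fun j => if j %% 3 == 0 then e 0 else if j == 3*L+1 then e6 else e5.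

Lemma wpt_Front L : Front (wpt L) L.
Proof.
have bc5 : bitc e5 by rewrite /bitc eqxx.
have bc6 : bitc e6 by rewrite /bitc eqxx orbT.
split.
- move=> g; rewrite /wpt.
  have -> : (3*g) %% 3 = 0 by lia.
  have -> : (3*g+1) %% 3 = 1 by lia.
  have -> : (3*g+2) %% 3 = 2 by lia.
  rewrite /= isP_e //; try lia.
  by apply/and3P; split=> //; case: ifP.
- move=> g hg; rewrite /wpt.
  have -> : (3*g+1) %% 3 = 1 by lia.
  have -> : (3*g+2) %% 3 = 2 by lia.
  rewrite /=.
  have -> : (3*g+1 == 3*L+1) = false by apply/eqP; lia.
  have -> : (3*g+2 == 3*L+1) = false by apply/eqP; lia.
  by [].
- rewrite /wpt; have -> : (3*L+1) %% 3 = 1 by lia.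
  by rewrite /= eqxx.
Qed.

Lemma wpt_U L : Ufam L (wpt L).
Proof. exact: Front_U (wpt_Front L). Qed.

Lemma wpt0 L : wpt L 0 = e 0. Proof. by []. Qed.

Lemma Good_id : Good id.
Proof. by split=> //; exists 0, 0. Qed.

Lemma t_Good : Good t.
Proof. split; [exact: t_Local|exact: t_PresP|by exists 1, 0]. Qed.

Lemma gens_Good n : n <= 20 -> forall f, List.In f (gens n) -> Good f.
Proof.
elim: n => [|n IH] hn f /=.
- by case=> // <-; exact: t_Good.
- have hn' : n < 20 by lia.
  case=> [<-|[<-|h]].
  + apply: lamp_Good; [exact: Cc_inv|exact: fb_ptP].
  + apply: lamp_Good; [exact: notC_inv|exact: fb_ptP].
  + by apply: IH => //; lia.
Qed.

Lemma H_Good f : H f -> Good f.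
Proof.
elim=> {f} [|f hf|f g _ hf _ hg|f g _ hf h1 h2].
- exact: Good_id.
- exact: gens_Good hf.
- exact: Good_comp.
- exact: Good_inv hf h1 h2.
Qed.

Lemma H_bij f : H f -> exists g, cancel f g /\ cancel g f.
Proof.
elim=> {f} [|f hf|f g _ [f' [h1 h2]] _ [g' [h3 h4]]|f g _ _ h1 h2].
- by exists id.
- case: (gens_aut (leqnn 20) hf) => _ _ [g [_ h1 h2]]; by exists g.
- exists (g' \o f'); split=> x /=; [by rewrite h1 h3|by rewrite h4 h2].
- by exists f.
Qed.

Fixpoint W n : list letter :=
  if n is n'.+1 then (false,true) :: (true,true) :: (false,false) :: (true,false) :: W n' else [::].

Lemma W_red1 n : reduced ((true,false) :: W n).
Proof. by elim: n => [|n IH] //=. Qed.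

Lemma W_red n : reduced (W n).
Proof. case: n => [|n] //=; exact: W_red1. Qed.

Lemma no_F2 : ~ contains_F2 H.
Proof.
case=> a [a' [b [b' [ha [hb [c1 [c2 [c3 [c4 hw]]]]]]]]].
have Ga := H_Good ha; have Gb := H_Good hb.
have Ga' := Good_inv Ga c1 c2; have Gb' := Good_inv Gb c3 c4.
set c := a' \o b' \o a \o b.
have Gc : Good c by apply: Good_comp (Good_comp (Good_comp Ga' Gb') Ga) Gb.
have [_ _ [na [ma ta]]] := Ga; have [_ _ [nb [mb tb]]] := Gb.
have ta' := TA_inv ta c2; have tb' := TA_inv tb c4.
have tc := TA_comp (TA_comp (TA_comp ta' tb') ta) tb.
have hteq : forall x, teq (c x) x.
  move=> x; have := tc x.
  have -> : ma + mb + na + nb = na + nb + ma + mb by lia.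
  by rewrite iter_t_tinvK.
have hK : cancel c (b' \o a' \o b \o a) by move=> x; rewrite /c /= c2 c4 c1 c3.
have hlaw := law Gc hteq hK.
set N := #|{perm Sigma}|.
have hN : 0 < N by apply/card_gt0P; exists 1%g.
have heval : forall n x, eval_word a a' b b' (W n) x = iter n c x.
  by elim=> [|n IH] x //=; rewrite IH.
apply: (hw (W N)); [by case: N hN | exact: W_red |].
by apply: functional_extensionality => x; rewrite heval hlaw.
Qed.

Lemma ptP_comp f g : ptP f -> ptP g -> ptP (f \o g).
Proof. by move=> hf hg s hs /=; apply: hf; apply: hg. Qed.

Section Pair.
Variables (Ui Uj : point Sigma -> bool).
Hypotheses (hUi : Uinv Ui) (hUj : Uinv Uj) (hd : disj Ui Uj).

Definition LP f g : Defs.map Sigma := lamp Ui f \o lamp Uj g.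

Lemma LP_comp f g f' g' : ptP g -> ptP f' -> ptP g' -> LP f g \o LP f' g' = LP (f \o f') (g \o g').
Proof.
move=> hg hf' hg'; apply: functional_extensionality => x; rewrite /LP /=.
rewrite (@lamp_swap Uj Ui g f') //; last by move=> z h1 h2; exact: hd h2 h1.
by rewrite !lamp_comp.
Qed.

Lemma LP_id f g x : (forall s, isP s -> f s = s) -> (forall s, isP s -> g s = s) -> LP f g x = x.
Proof. by move=> hf hg; rewrite /LP /= !lamp_idP. Qed.
End Pair.

Definition PB (a a' : Sigma -> Sigma) :=
  [/\ ptP a, ptP a', (forall s, isP s -> a' (a s) = s) & (forall s, isP s -> a (a' s) = s)].

Lemma no_vs : ~ virt_solvable H.
Proof.
case=> K [[K1 Kc Ki] KH [n hsol] [reps [hrin hcov]]].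
set m := List.length reps.
have hex : forall i k, exists p, k < 20 -> p < m /\ exists kk, K kk /\
    lamp (Ufam i) (fb k) = List.nth p reps id \o kk.
  move=> i k; case hk: (k < 20); last by exists 0.
  have [r [kk [hin hK heq]]] := hcov _ (Lam_Ufam i hk).
  have [p [hp hr]] := List.In_nth reps r id hin.
  exists p => _; split; first exact/ltP.
  by exists kk; split=> //; rewrite hr.
pose pick i k := proj1_sig (@constructive_indefinite_description _ _ (hex i k)).
have hpick : forall i k, k < 20 -> pick i k < m /\ exists kk, K kk /\
    lamp (Ufam i) (fb k) = List.nth (pick i k) reps id \o kk.
  by move=> i k hk; rewrite /pick; case: constructive_indefinite_description => p /= /(_ hk).
pose M := (m.+1 ^ 20).+1.
pose F (i : 'I_M) : {ffun 'I_20 -> 'I_m.+1} := [ffun k : 'I_20 => inord (pick i k)].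
have : ~~ injectiveb F.
  apply/negP => /injectiveP /leq_card.
  by rewrite card_ffun !card_ord /M ltnn.
case/injectivePn => i [j hij hF].
have hpij : forall k, k < 20 -> pick i k = pick j k.
  move=> k hk; have := congr1 (fun f : {ffun 'I_20 -> 'I_m.+1} => val (f (Ordinal hk))) hF; rewrite /F /= !ffunE /=.
  have [hi _] := hpick i k hk; have [hj _] := hpick j k hk.
  by rewrite !inordK; lia.
set Ui := Ufam i; set Uj := Ufam j.
have hUi : Uinv Ui by exact: Ufam_inv.
have hUj : Uinv Uj by exact: Ufam_inv.
have hd : disj Ui Uj.
  move=> z h1 h2; move/negP: hij; apply; apply/eqP; apply: val_inj; exact: Ufam_disj h1 h2.
have claim : forall n k, k < 20 -> exists a a', PB a a' /\ derived K n (LP Ui Uj a (fb k)).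
  elim=> [|n' IH] k hk.
  - have [hp1 [kk1 [hK1 he1]]] := hpick i k hk.
    have [hp2 [kk2 [hK2 he2]]] := hpick j k hk.
    rewrite -hpij // in he2.
    set r := List.nth (pick i k) reps id in he1 he2.
    have hr : H r by apply: hrin; apply: List.nth_In; apply/ltP.
    have [rinv [hr1 hr2]] := H_bij hr.
    set k1' := lamp Ui (fbi k) \o r.
    have hk1' : K k1'.
      apply: (Ki kk1) => //.
      + move=> x; rewrite /k1' /=.
        have := congr1 (fun f => f x) he1 => /= <-.
        rewrite lamp_comp //; last exact: fb_ptP.
        by apply: lamp_idP => //; exact: fbK.
      + move=> y; rewrite /k1' /=.
        apply: (can_inj hr1).
        have := congr1 (fun f => f (lamp Ui (fbi k) (r y))) he1 => /= <-.
        rewrite lamp_comp //; last exact: fbi_ptP.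
        by apply: lamp_idP => //; exact: fbiK.
    exists (fbi k), (fb k); split.
    + split; [exact: fbi_ptP|exact: fb_ptP|exact: fbiK|exact: fbK].
    + have -> : LP Ui Uj (fbi k) (fb k) = k1' \o kk2.
        apply: functional_extensionality => x; rewrite /LP /k1' /=.
        by have := congr1 (fun f => f x) he2 => /= ->.
      exact: Kc.
  - have [k1 [k2 [h1 h2 hs]]] := tab_spec hk.
    have [a1 [a1' [[pa1 pa1' ia1 ia1'] D1]]] := IH k1 h1.
    have [a2 [a2' [[pa2 pa2' ia2 ia2'] D2]]] := IH k2 h2.
    have f1 := fb_ptP h1; have f2 := fb_ptP h2; have g1 := fbi_ptP h1; have g2 := fbi_ptP h2.
    exists (a1' \o a2' \o a1 \o a2), (a2' \o a1' \o a2 \o a1); split.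
    + split.
      * exact: ptP_comp (ptP_comp (ptP_comp pa1' pa2') pa1) pa2.
      * exact: ptP_comp (ptP_comp (ptP_comp pa2' pa1') pa2) pa1.
      * move=> s hs0 /=.
        have p1 := pa2 _ hs0; have p2 := pa1 _ p1; have p3 := pa2' _ p2.
        by rewrite ia1' // ia2' // ia1 // ia2.
      * move=> s hs0 /=.
        have q1 := pa1 _ hs0; have q2 := pa2 _ q1; have q3 := pa1' _ q2.
        by rewrite ia2' // ia1' // ia2 // ia1.
    + have E : LP Ui Uj (a1' \o a2' \o a1 \o a2) (fb k) =
          LP Ui Uj a1' (fbi k1) \o LP Ui Uj a2' (fbi k2) \o LP Ui Uj a1 (fb k1) \o LP Ui Uj a2 (fb k2).
        rewrite (@LP_comp _ _ hUi hUj hd _ _ _ _ g1 pa2' g2) (@LP_comp _ _ hUi hUj hd _ _ _ _ (ptP_comp g1 g2) pa1 f1).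
        rewrite (@LP_comp _ _ hUi hUj hd _ _ _ _ (ptP_comp (ptP_comp g1 g2) f1) pa2 f2).
        by rewrite /LP (lamp_ext _ hs).
      rewrite E; apply: gen_base.
      exists (LP Ui Uj a1 (fb k1)), (LP Ui Uj a1' (fbi k1)), (LP Ui Uj a2 (fb k2)), (LP Ui Uj a2' (fbi k2)).
      split; first exact: D1.
      split; first exact: D2.
      split.
        move=> x; rewrite -[LHS]/((_ \o _) x) (@LP_comp _ _ hUi hUj hd _ _ _ _ g1 pa1 f1).
        apply: LP_id => //; by first [exact: ia1 | exact: fbK].
      split.
        move=> x; rewrite -[LHS]/((_ \o _) x) (@LP_comp _ _ hUi hUj hd _ _ _ _ f1 pa1' g1).
        apply: LP_id => //; by first [exact: ia1' | exact: fbiK].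
      split.
        move=> x; rewrite -[LHS]/((_ \o _) x) (@LP_comp _ _ hUi hUj hd _ _ _ _ g2 pa2 f2).
        apply: LP_id => //; by first [exact: ia2 | exact: fbK].
      split=> //.
      move=> x; rewrite -[LHS]/((_ \o _) x) (@LP_comp _ _ hUi hUj hd _ _ _ _ f2 pa2' g2).
      apply: LP_id => //; by first [exact: ia2' | exact: fbiK].
have [a [a' [_ hD]]] := claim n 0 isT.
have hid := hsol _ hD.
have := congr1 (fun f : Defs.map Sigma => f (wpt j) 0) hid.
have hU0 : Uj (ctx (wpt j) 0) by exact: wpt_U.
have hw0 : lamp Uj (fb 0) (wpt j) 0 = e 1.
  rewrite /lamp wpt0 isP_e; last lia.
  rewrite hU0 /fb cyc3_e //; exact: (trip_ok (isT : 0 < 20)).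
have hui : Ui (ctx (lamp Uj (fb 0) (wpt j)) 0) = false.
  rewrite (hUi _ (ctx (wpt j) 0)); last by apply: teq_ctx; apply: lamp_teq; exact: fb_ptP.
  by apply/negP => h; exact: hd h hU0.
rewrite /LP /= {1}/lamp hui andbF hw0 wpt0 => /eqP.
by rewrite e_inj //; lia.
Qed.

End Constr.

Theorem mainTheorem12 (Sigma : finType) (hSigma : 8 <= #|Sigma|) :
  ~ Tits_alternative_Aut Sigma.
Proof.
move=> hT.
have : 0 < #|Sigma| by apply: leq_trans hSigma.
case/card_gt0P => x0 _.
case: (hT (gens x0 20)).
- by move=> f hf; exact: (gens_aut hSigma (leqnn 20) hf).
- exact: (no_vs hSigma).
- exact: (no_F2 hSigma).
Qed.
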